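(* Suppose the random walk $R$ is irreducible, aperiodic, positive recurrent and has negative drift. For $i=1,\dots,M$ let $r_i$ satisfy $$1<r_i<\inf_{n\in S:\, i\in I(n)}\frac{s^-_i(n)}{s^+_i(n)}$$ (such $r_i$ exist, i.e. the infimum is finite and strictly greater than $1$). Let $\varepsilon^*=\min_{n\in S,\, i\in I(n)}\{s^+_i(n)(1-r_i)+s^-_i(n)(1-r_i^{-1})\}$ (then $\varepsilon^*>0$). Let $v_0\ge1$, $v_1,\dots,v_M>0$, $0<\varepsilon<\varepsilon^*$, and define $$V(n)=v_0+\sum_{i=1}^M v_i r_i^{n_i},\qquad b=\varepsilon v_0+\sum_{i=1}^M v_i\Big(\sup_{n\in S}s^+_i(n)\,(r_i-1)+\varepsilon\Big),$$ $$B=\Big\{n\in S:\ n_i\le \max\Big\{\tfrac{\log(b/v_i)-\log(\varepsilon^*-\varepsilon)}{\log r_i},\,1\Big\}\ \ \forall i=1,\dots,M\Big\}.$$ Then $V:S\to[1,\infty)$, $B$ is finite, $b>0$, and for all $n\in S$, $$\sum_{u\in N_{c(n)}}p_{c(n),u}V(n+u)-V(n)\le-\varepsilon V(n)+b\,\mathbf 1_B(n),$$ i.e. $R$ is geometrically ergodic with these $V,\varepsilon,b,B$.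
   Context: Let $M\ge 1$ and $S=\{0,1,2,\dots\}^M$. For $n\in S$ let $N(n)=\{u\in\{-1,0,1\}^M: n+u\in S\}$. A partition $C=\{C_k\}_{k\in K}$ ($K$ finite) of $S$ is a family of pairwise disjoint sets covering $S$ such that $N(n)=N(n')$ whenever $n,n'$ lie in the same $C_k$; write $N_k$ for this common set and $c(n)$ for the index $k$ with $n\in C_k$. The random walk $R$ is a discrete-time Markov chain on $S$ with transition probabilities $P(n,n+u)=p_{c(n),u}\ge0$ for $u\in N_{c(n)}$, $P(n,m)=0$ if $m-n\notin N_{c(n)}$, and $\sum_{u\in N_k}p_{k,u}=1$ for every $k$. For $n\in S$, $I(n)=\{i\in\{1,\dots,M\}: n_i>0\}$, $s^+_i(n)=\sum_{u\in N_{c(n)}:u_i=1}p_{c(n),u}$ and $s^-_i(n)=\sum_{u\in N_{c(n)}:u_i=-1}p_{c(n),u}$ (a ratio $s^-_i(n)/s^+_i(n)$ with $s^+_i(n)=0$ is interpreted as $+\infty$). $R$ has negative drift if $\sup_{n\in S,\,i\in I(n)}\{s^+_i(n)-s^-_i(n)\}<0$. *)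

(* Defs.v *)
From Stdlib Require Import Reals Lra Lia ZArith Arith List.
Import ListNotations.
Open Scope R_scope.

(* States of S = {0,1,2,...}^M and displacements are lists of integers of
   length M; coordinate i (paper: i+1) is [nth i n 0]. *)

Fixpoint vadd (n u : list Z) : list Z :=
  match n, u with
  | a :: n', b :: u' => (a + b)%Z :: vadd n' u'
  | _, _ => []
  end.

Definition inSb (M : nat) (z : list Z) : bool :=
  Nat.eqb (length z) M && forallb (fun x => Z.leb 0 x) z.
Definition inS (M : nat) (z : list Z) : Prop := inSb M z = true.

Fixpoint disps (m : nat) : list (list Z) :=
  match m with
  | O => [ [] ]
  | S m' => flat_map (fun u => [ (-1)%Z :: u; 0%Z :: u; 1%Z :: u ]) (disps m')
  end.

Definition lsum {A : Type} (f : A -> R) (l : list A) : R :=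
  fold_right (fun a acc => f a + acc) 0 l.

(* Sum over u in N(n) = { u in {-1,0,1}^M : n + u in S } of g u. *)
Definition sumN (M : nat) (n : list Z) (g : list Z -> R) : R :=
  lsum (fun u => if inSb M (vadd n u) then g u else 0) (disps M).

(* I(n): i (0-based, i < M) with n_i > 0. *)
Definition inI (M : nat) (n : list Z) (i : nat) : Prop :=
  (i < M)%nat /\ (0 < nth i n 0%Z)%Z.

Definition splus {K : Type} (M : nat) (c : list Z -> K) (p : K -> list Z -> R)
  (i : nat) (n : list Z) : R :=
  sumN M n (fun u => if Z.eqb (nth i u 0%Z) 1 then p (c n) u else 0).
Definition sminus {K : Type} (M : nat) (c : list Z -> K) (p : K -> list Z -> R)
  (i : nat) (n : list Z) : R :=
  sumN M n (fun u => if Z.eqb (nth i u 0%Z) (-1) then p (c n) u else 0).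

(* c is the index map of a partition {C_k} of S (C_k = c^-1(k) ∩ S), K finite,
   and N(n) = N(n') whenever c n = c n'. *)
Definition is_partition (M : nat) {K : Type} (c : list Z -> K) : Prop :=
  (exists lK : list K, forall k, In k lK) /\
  (forall n n', inS M n -> inS M n' -> c n = c n' ->
     forall u, In u (disps M) -> (inS M (vadd n u) <-> inS M (vadd n' u))).

Definition is_transition (M : nat) {K : Type} (c : list Z -> K)
  (p : K -> list Z -> R) : Prop :=
  (forall n u, inS M n -> In u (disps M) -> inS M (vadd n u) -> 0 <= p (c n) u) /\
  (forall n, inS M n -> sumN M n (fun u => p (c n) u) = 1).

Fixpoint Pk (M : nat) {K : Type} (c : list Z -> K) (p : K -> list Z -> R)
  (k : nat) (n m : list Z) : R :=
  match k with
  | O => if list_eq_dec Z.eq_dec n m then 1 else 0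
  | S k' => sumN M n (fun u => p (c n) u * Pk M c p k' (vadd n u) m)
  end.

(* First-passage probabilities f^(k)(n,m): probability that the walk started
   at n visits m for the first time at time k >= 1. *)
Fixpoint Fk (M : nat) {K : Type} (c : list Z -> K) (p : K -> list Z -> R)
  (k : nat) (n m : list Z) : R :=
  match k with
  | O => 0
  | S k' => sumN M n (fun u => p (c n) u *
             (if list_eq_dec Z.eq_dec (vadd n u) m
              then (match k' with O => 1 | _ => 0 end)
              else Fk M c p k' (vadd n u) m))
  end.

Definition irreducible (M : nat) {K : Type} (c : list Z -> K) (p : K -> list Z -> R) : Prop :=
  forall n m, inS M n -> inS M m -> exists k, 0 < Pk M c p k n m.

Definition aperiodic (M : nat) {K : Type} (c : list Z -> K) (p : K -> list Z -> R) : Prop :=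
  forall n, inS M n -> forall d : nat,
    (forall k, (0 < k)%nat -> 0 < Pk M c p k n n -> Nat.divide d k) -> d = 1%nat.

Definition positive_recurrent (M : nat) {K : Type} (c : list Z -> K)
  (p : K -> list Z -> R) : Prop :=
  forall n, inS M n ->
    infinite_sum (fun k => Fk M c p k n n) 1 /\
    exists mu, infinite_sum (fun k => INR k * Fk M c p k n n) mu.

Definition negative_drift (M : nat) {K : Type} (c : list Z -> K) (p : K -> list Z -> R) : Prop :=
  exists delta, 0 < delta /\
    forall n i, inS M n -> inI M n i -> splus M c p i n - sminus M c p i n <= - delta.

Definition Vfun (M : nat) (v0 : R) (v r : nat -> R) (n : list Z) : R :=
  v0 + lsum (fun i => v i * r i ^ Z.to_nat (nth i n 0%Z)) (seq 0 M).

(* b = eps v0 + sum_i v_i (sup_n s^+_i(n)(r_i - 1) + eps), where supp i is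
   that supremum *)
Definition bval (M : nat) (eps v0 : R) (v supp : nat -> R) : R :=
  eps * v0 + lsum (fun i => v i * (supp i + eps)) (seq 0 M).

Definition Bset (M : nat) (b epsS eps : R) (v r : nat -> R) (n : list Z) : Prop :=
  inS M n /\ forall i, (i < M)%nat ->
    IZR (nth i n 0%Z) <= Rmax ((ln (b / v i) - ln (epsS - eps)) / ln (r i)) 1.

(* Main.v *)
Require Import Defs.
From Stdlib Require Import Reals ZArith List Lra Lia Classical.
Import ListNotations.
Open Scope R_scope.

Lemma lsum_ext {A} (f g : A -> R) l : (forall a, In a l -> f a = g a) -> lsum f l = lsum g l.
Proof. induction l; simpl; intros H; auto. rewrite H by auto. rewrite IHl; auto. Qed.

Lemma lsum_le {A} (f g : A -> R) l : (forall a, In a l -> f a <= g a) -> lsum f l <= lsum g l.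
Proof. induction l; simpl; intros H; [lra|]. pose proof (H a (or_introl eq_refl)).
  pose proof (IHl (fun x h => H x (or_intror h))). lra. Qed.

Lemma lsum_plus {A} (f g : A -> R) l : lsum (fun a => f a + g a) l = lsum f l + lsum g l.
Proof. induction l; simpl; [lra|]. rewrite IHl; ring. Qed.

Lemma lsum_mult {A} (k : R) (f : A -> R) l : lsum (fun a => k * f a) l = k * lsum f l.
Proof. induction l; simpl; [ring|]. rewrite IHl; ring. Qed.

Lemma lsum_lin {A} (k : R) (f g : A -> R) l :
  lsum (fun a => f a - g a + k * g a) l = lsum f l - lsum g l + k * lsum g l.
Proof. induction l; simpl; [ring|]. rewrite IHl; ring. Qed.

Lemma lsum_0 {A} (l : list A) : lsum (fun _ => 0) l = 0.
Proof. induction l; simpl; [ring|]. rewrite IHl; ring. Qed.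

Lemma lsum_swap {A B} (h : A -> B -> R) l1 l2 :
  lsum (fun a => lsum (fun b => h a b) l2) l1 = lsum (fun b => lsum (fun a => h a b) l1) l2.
Proof. induction l1; simpl. - rewrite lsum_0; auto.
  - rewrite IHl1. rewrite <- lsum_plus. auto. Qed.

Lemma lsum_le_pick {A} (f g : A -> R) l i d : In i l -> 0 <= d ->
  (forall a, In a l -> f a <= g a) -> f i <= g i - d -> lsum f l <= lsum g l - d.
Proof. induction l; simpl; intros Hi Hd H Hfi; [contradiction|].
  destruct Hi as [<-|Hi].
  - pose proof (lsum_le f g l (fun x h => H x (or_intror h))). lra.
  - pose proof (H a (or_introl eq_refl)). pose proof (IHl Hi Hd (fun x h => H x (or_intror h)) Hfi). lra.
Qed.

Lemma lsum_nonneg {A} (f : A -> R) l : (forall a, In a l -> 0 <= f a) -> 0 <= lsum f l.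
Proof. intros H. pose proof (lsum_le (fun _ => 0) f l H). rewrite lsum_0 in H0. auto. Qed.

Lemma vadd_nth n u i : (i < length n)%nat -> (i < length u)%nat ->
  nth i (vadd n u) 0%Z = (nth i n 0 + nth i u 0)%Z.
Proof. revert u i; induction n as [|a n IH]; intros u i H1 H2; simpl in *; [lia|].
  destruct u as [|b u]; simpl in *; [lia|]. destruct i; auto. apply IH; lia. Qed.

Lemma vadd_len n u : length (vadd n u) = Nat.min (length n) (length u).
Proof. revert u; induction n; intros [|b u]; simpl; auto. Qed.

Lemma disps_prop m u : In u (disps m) -> length u = m /\
  forall i, (nth i u 0 = -1 \/ nth i u 0 = 0 \/ nth i u 0 = 1)%Z.
Proof. revert u; induction m; simpl; intros u H.
  - destruct H as [<-|[]]. split; auto. intros [|i]; simpl; auto.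
  - apply in_flat_map in H. destruct H as [w [Hw H]]. destruct (IHm w Hw) as [Hl Hn].
    simpl in H. destruct H as [<-|[<-|[<-|[]]]]; (split; [simpl; lia|]);
     intros [|i]; simpl; auto.
Qed.

Lemma inSb_prop M z : inSb M z = true -> length z = M /\ forall i, (0 <= nth i z 0)%Z.
Proof. unfold inSb. intros H. apply andb_prop in H as [H1 H2].
  apply Nat.eqb_eq in H1. split; auto. intros i.
  destruct (Nat.lt_ge_cases i (length z)).
  - rewrite forallb_forall in H2. specialize (H2 _ (nth_In z 0%Z H)). apply Z.leb_le in H2; auto.
  - rewrite nth_overflow; auto; lia.
Qed.

Lemma bound_ex (f : nat -> R) m : exists N : Z, (0 <= N)%Z /\ forall i, (i < m)%nat -> f i <= IZR N.
Proof. induction m.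
  - exists 0%Z; split; [lia|]; intros; lia.
  - destruct IHm as [N [HN H]]. destruct (archimed (f m)) as [H1 _].
    exists (Z.max N (up (f m))). split; [lia|]. intros i Hi.
    destruct (Nat.eq_dec i m) as [->|].
    + apply Rle_trans with (IZR (up (f m))); [lra|]. apply IZR_le; lia.
    + apply Rle_trans with (IZR N); [apply H; lia|]. apply IZR_le; lia.
Qed.

Fixpoint allv (m : nat) (N : nat) : list (list Z) :=
  match m with
  | O => [ [] ]
  | S m' => flat_map (fun x => map (cons x) (allv m' N)) (map Z.of_nat (seq 0 (S N)))
  end.

Lemma allv_in N z : (forall i, (i < length z)%nat -> (0 <= nth i z 0 <= Z.of_nat N)%Z) ->
  In z (allv (length z) N).
Proof. induction z as [|a z IH]; intros H; [simpl; auto|].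
  change (In (a::z) (flat_map (fun x => map (cons x) (allv (length z) N)) (map Z.of_nat (seq 0 (S N))))).
  apply in_flat_map. exists a. split.
  - pose proof (H 0%nat ltac:(simpl; lia)) as Ha. simpl in Ha.
    apply in_map_iff. exists (Z.to_nat a). split; [lia|]. apply in_seq. simpl in Ha. lia.
  - apply in_map. apply IH. intros i Hi. apply (H (S i)). simpl; lia.
Qed.

Lemma sumN_V M K (c : list Z -> K) p v0 v r n :
  sumN M n (fun u => p (c n) u * Vfun M v0 v r (vadd n u)) =
  v0 * sumN M n (fun u => p (c n) u) +
  lsum (fun i => v i * sumN M n (fun u => p (c n) u * r i ^ Z.to_nat (nth i (vadd n u) 0%Z))) (seq 0 M).
Proof.
  unfold sumN.
  rewrite (lsum_ext _ (fun u => v0 * (if inSb M (vadd n u) then p (c n) u else 0) +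
    lsum (fun i => v i * (if inSb M (vadd n u) then p (c n) u * r i ^ Z.to_nat (nth i (vadd n u) 0%Z) else 0)) (seq 0 M))).
  - rewrite lsum_plus, lsum_mult, lsum_swap. f_equal. apply lsum_ext. intros i _.
    rewrite lsum_mult. auto.
  - intros u _. destruct (inSb M (vadd n u)).
    + unfold Vfun. rewrite Rmult_plus_distr_l. f_equal; [ring|].
      rewrite <- lsum_mult. apply lsum_ext. intros; ring.
    + rewrite (lsum_ext _ (fun _ => 0)) by (intros; ring). rewrite lsum_0. ring.
Qed.

Lemma sumN_ri M K (c : list Z -> K) p r n i :
  inSb M n = true -> (i < M)%nat -> 0 < r ->
  sumN M n (fun u => p (c n) u * r ^ Z.to_nat (nth i (vadd n u) 0%Z)) =
  r ^ Z.to_nat (nth i n 0%Z) * (sumN M n (fun u => p (c n) u)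
     + (r - 1) * splus M c p i n + (/ r - 1) * sminus M c p i n).
Proof.
  intros Hn Hi Hr. unfold splus, sminus, sumN.
  rewrite <- !lsum_mult, <- !lsum_plus, <- lsum_mult.
  apply lsum_ext. intros u Hu.
  destruct (inSb M (vadd n u)) eqn:E; [|ring].
  destruct (disps_prop M u Hu) as [Hl Hv].
  destruct (inSb_prop M n Hn) as [Hln Hnn].
  destruct (inSb_prop M _ E) as [_ Hnu].
  specialize (Hnu i). rewrite vadd_nth in Hnu |- * by lia.
  specialize (Hnn i).
  destruct (Hv i) as [H|[H|H]]; rewrite H in *; simpl Z.eqb; cbv iota.
  - replace (Z.to_nat (nth i n 0%Z)) with (S (Z.to_nat (nth i n 0%Z + -1))) by lia.
    simpl. field. lra.
  - rewrite Z.add_0_r. ring.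
  - replace (Z.to_nat (nth i n 0%Z + 1)) with (S (Z.to_nat (nth i n 0%Z))) by lia.
    simpl. ring.
Qed.

Lemma sminus0 M K (c : list Z -> K) p n i :
  (nth i n 0%Z = 0)%Z -> inSb M n = true -> (i < M)%nat -> sminus M c p i n = 0.
Proof.
  intros H0 Hn Hi. unfold sminus, sumN. transitivity (lsum (fun _ : list Z => 0) (disps M)); [|apply lsum_0].
  apply lsum_ext. intros u Hu.
  destruct (inSb M (vadd n u)) eqn:E; auto.
  destruct (disps_prop M u Hu) as [Hl Hv].
  destruct (inSb_prop M n Hn) as [Hln Hnn].
  destruct (inSb_prop M _ E) as [_ Hnu].
  specialize (Hnu i). rewrite vadd_nth in Hnu by lia.
  destruct (Z.eqb_spec (nth i u 0%Z) (-1)); [lia|]. auto.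
Qed.

Lemma splus_nonneg M K (c : list Z -> K) p i n :
  is_transition M c p -> inS M n -> 0 <= splus M c p i n.
Proof.
  intros [Hp _] Hn. unfold splus, sumN. apply lsum_nonneg. intros u Hu.
  destruct (inSb M (vadd n u)) eqn:E; [|lra].
  destruct (Z.eqb _ _); [|lra]. apply Hp; auto.
Qed.

Definition Tt M K (c : list Z -> K) p r n i :=
  splus M c p i n * (r i - 1) + sminus M c p i n * (/ r i - 1).

Lemma drift_eq M K (c : list Z -> K) p r v0 v eps n :
  inS M n -> sumN M n (fun u => p (c n) u) = 1 ->
  (forall i, (i < M)%nat -> 0 < r i) ->
  sumN M n (fun u => p (c n) u * Vfun M v0 v r (vadd n u)) - Vfun M v0 v r n + eps * Vfun M v0 v r n
  = eps * v0 + lsum (fun i => v i * r i ^ Z.to_nat (nth i n 0%Z) * (Tt M K c p r n i + eps)) (seq 0 M).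
Proof.
  intros Hn H1 Hr. rewrite sumN_V, H1.
  rewrite (lsum_ext (fun i => v i * sumN M n (fun u => p (c n) u * r i ^ Z.to_nat (nth i (vadd n u) 0%Z)))
     (fun i => v i * (r i ^ Z.to_nat (nth i n 0%Z) * (1 + (r i - 1) * splus M c p i n + (/ r i - 1) * sminus M c p i n)))).
  2:{ intros i Hi. apply in_seq in Hi. rewrite sumN_ri, H1; auto; try lia. apply Hr; lia. }
  rewrite (lsum_ext (fun i => v i * r i ^ Z.to_nat (nth i n 0%Z) * (Tt M K c p r n i + eps))
     (fun i => v i * (r i ^ Z.to_nat (nth i n 0%Z) * (1 + (r i - 1) * splus M c p i n + (/ r i - 1) * sminus M c p i n))
       - v i * r i ^ Z.to_nat (nth i n 0%Z) + eps * (v i * r i ^ Z.to_nat (nth i n 0%Z)))).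
  2:{ intros i _. unfold Tt. ring. }
  rewrite lsum_lin. unfold Vfun. ring.
Qed.

Lemma big_pow (r bb vv e x : R) (k : nat) :
  1 < r -> 0 < bb -> 0 < vv -> 0 < e -> INR k = x ->
  (ln (bb / vv) - ln e) / ln r < x -> bb < e * vv * r ^ k.
Proof.
  intros Hr Hb Hv He Hk H.
  assert (Hl : 0 < ln r) by (rewrite <- ln_1; apply ln_increasing; lra).
  assert (H2 : ln (bb / vv) - ln e < x * ln r).
  { apply Rmult_lt_compat_r with (r := ln r) in H; auto.
    unfold Rdiv in H. rewrite Rmult_assoc, Rinv_l, Rmult_1_r in H; lra. }
  apply exp_increasing in H2.
  unfold Rminus in H2. rewrite exp_plus, exp_Ropp, !exp_ln in H2 by (try apply Rdiv_lt_0_compat; lra).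
  rewrite <- (Rpower_pow k r) by lra. unfold Rpower. rewrite Hk.
  assert (0 < exp (x * ln r)) by apply exp_pos.
  apply Rmult_lt_compat_l with (r := e * vv) in H2; [|nra].
  replace (e * vv * (bb / vv * / e)) with bb in H2 by (field; lra). lra.
Qed.

Theorem lemma4p2 (M : nat) (K : Type) (c : list Z -> K) (p : K -> list Z -> R)
  (r : nat -> R) (epsS : R) (supp : nat -> R) (v0 : R) (v : nat -> R) (eps : R) :
  (1 <= M)%nat ->
  is_partition M c ->
  is_transition M c p ->
  irreducible M c p ->
  aperiodic M c p ->
  positive_recurrent M c p ->
  negative_drift M c p ->
  (forall i, (i < M)%nat ->
     1 < r i /\
     exists delta, 0 < delta /\
       forall n, inS M n -> inI M n i -> 0 < splus M c p i n ->
         r i + delta <= sminus M c p i n / splus M c p i n) ->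
  (exists n i, inS M n /\ inI M n i /\
     epsS = splus M c p i n * (1 - r i) + sminus M c p i n * (1 - / r i)) ->
  (forall n i, inS M n -> inI M n i ->
     epsS <= splus M c p i n * (1 - r i) + sminus M c p i n * (1 - / r i)) ->
  (forall i, (i < M)%nat ->
     is_lub (fun x => exists n, inS M n /\ x = splus M c p i n * (r i - 1)) (supp i)) ->
  1 <= v0 ->
  (forall i, (i < M)%nat -> 0 < v i) ->
  0 < eps -> eps < epsS ->
  let V := Vfun M v0 v r in
  let b := bval M eps v0 v supp in
  let B := Bset M b epsS eps v r in
  (forall n, inS M n -> 1 <= V n) /\
  (exists L : list (list Z), forall n, B n -> In n L) /\
  0 < b /\
  0 < epsS /\
  (forall n, inS M n ->
     (B n -> sumN M n (fun u => p (c n) u * V (vadd n u)) - V n <= - eps * V n + b) /\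
     (~ B n -> sumN M n (fun u => p (c n) u * V (vadd n u)) - V n <= - eps * V n)).
Proof.
  intros HM Hpart Htr _ _ _ _ Hr Hex Hmin Hsup Hv0 Hv Heps HepsS V b B.
  assert (Hr1 : forall i, (i < M)%nat -> 1 < r i) by (intros i Hi; apply (Hr i Hi)).
  assert (Hsn : forall i, (i < M)%nat -> 0 <= supp i).
  { intros i Hi. destruct Hex as [n0 [_ [Hn0 _]]].
    pose proof (splus_nonneg M K c p i n0 Htr Hn0).
    pose proof (proj1 (Hsup i Hi) (splus M c p i n0 * (r i - 1)) (ex_intro _ n0 (conj Hn0 eq_refl))).
    pose proof (Hr1 i Hi). nra. }
  assert (Hb : 0 < b).
  { unfold b, bval. assert (0 <= lsum (fun i => v i * (supp i + eps)) (seq 0 M)).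
    { apply lsum_nonneg. intros i Hi. apply in_seq in Hi.
      pose proof (Hv i ltac:(lia)). pose proof (Hsn i ltac:(lia)). nra. }
    nra. }
  split; [|split; [|split; [exact Hb|split; [lra|]]]].
  - intros n _. unfold V, Vfun.
    assert (0 <= lsum (fun i => v i * r i ^ Z.to_nat (nth i n 0%Z)) (seq 0 M)); [|lra].
    apply lsum_nonneg. intros i Hi. apply in_seq in Hi.
    pose proof (Hv i ltac:(lia)). pose proof (Hr1 i ltac:(lia)).
    apply Rmult_le_pos; [lra|]. apply pow_le; lra.
  - destruct (bound_ex (fun i => Rmax ((ln (b / v i) - ln (epsS - eps)) / ln (r i)) 1) M) as [N [HN0 HN]].
    exists (allv M (Z.to_nat N)). intros n [Hn HB].
    destruct (inSb_prop M n Hn) as [Hl Hnn]. rewrite <- Hl. apply allv_in.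
    intros i Hi. split; auto. rewrite Z2Nat.id by lia. apply le_IZR.
    eapply Rle_trans; [apply HB; lia|]. apply HN; lia.
  - intros n Hn.
    assert (Hsum : sumN M n (fun u => p (c n) u) = 1) by (apply (proj2 Htr); auto).
    assert (Hrp : forall i, (i < M)%nat -> 0 < r i) by (intros i Hi; pose proof (Hr1 i Hi); lra).
    pose proof (drift_eq M K c p r v0 v eps n Hn Hsum Hrp) as E.
    destruct (inSb_prop M n Hn) as [Hl Hnn].
    set (a := fun i => v i * r i ^ Z.to_nat (nth i n 0%Z) * (Tt M K c p r n i + eps)) in E.
    set (g := fun i => v i * (supp i + eps)).
    assert (Hpos : forall i, (i < M)%nat -> (0 < nth i n 0)%Z ->
              a i <= - (epsS - eps) * (v i * r i ^ Z.to_nat (nth i n 0%Z))).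
    { intros i Hi Hni. unfold a, Tt.
      pose proof (Hmin n i Hn (conj Hi Hni)).
      assert (0 < v i * r i ^ Z.to_nat (nth i n 0%Z)).
      { apply Rmult_lt_0_compat; [apply Hv; auto|]. apply pow_lt. apply Hrp; auto. }
      assert (splus M c p i n * (r i - 1) + sminus M c p i n * (/ r i - 1) + eps <= -(epsS - eps)) by lra.
      rewrite Rmult_assoc. nra. }
    assert (Hag : forall i, In i (seq 0 M) -> a i <= g i).
    { intros i Hi. apply in_seq in Hi. assert (Hi' : (i < M)%nat) by lia.
      pose proof (Hnn i). destruct (Z.eq_dec (nth i n 0%Z) 0) as [H0|H0].
      - unfold a, g, Tt. rewrite H0, (sminus0 M K c p n i H0 Hn Hi'). simpl.
        pose proof (proj1 (Hsup i Hi') (splus M c p i n * (r i - 1)) (ex_intro _ n (conj Hn eq_refl))).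
        pose proof (Hv i Hi'). nra.
      - pose proof (Hpos i Hi' ltac:(lia)).
        assert (0 < v i * r i ^ Z.to_nat (nth i n 0%Z)).
        { apply Rmult_lt_0_compat; [apply Hv; auto|]. apply pow_lt. apply Hrp; auto. }
        unfold g. pose proof (Hv i Hi'). pose proof (Hsn i Hi'). nra. }
    assert (Hb' : b = eps * v0 + lsum g (seq 0 M)) by reflexivity.
    fold V in E. split.
    + intros _. pose proof (lsum_le a g _ Hag). lra.
    + intros HnB. unfold B, Bset in HnB.
      assert (exists i, (i < M)%nat /\ Rmax ((ln (b / v i) - ln (epsS - eps)) / ln (r i)) 1 < IZR (nth i n 0%Z)) as [i [Hi Hbig]].
      { apply NNPP. intros Hne. apply HnB. split; auto. intros i Hi.
        apply Rnot_lt_le. intros Hlt. apply Hne. exists i; auto. }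
      pose proof (Rmax_l ((ln (b / v i) - ln (epsS - eps)) / ln (r i)) 1).
      pose proof (Rmax_r ((ln (b / v i) - ln (epsS - eps)) / ln (r i)) 1).
      assert (Hni : (0 < nth i n 0)%Z) by (apply lt_IZR; lra).
      assert (HK : b < (epsS - eps) * v i * r i ^ Z.to_nat (nth i n 0%Z)).
      { apply big_pow with (x := IZR (nth i n 0%Z)); auto; try lra.
        rewrite INR_IZR_INZ, Z2Nat.id by lia. auto. }
      pose proof (Hpos i Hi Hni).
      assert (Hgi : 0 <= g i) by (unfold g; pose proof (Hv i Hi); pose proof (Hsn i Hi); nra).
      pose proof (lsum_le_pick a g (seq 0 M) i (g i + b) ltac:(apply in_seq; lia) ltac:(lra) Hag ltac:(lra)).
      lra.
Qed.
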